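(* Let $\mathfrak M$ be a D2-brane, $M_\Lambda = \{\vec x \in \mathbb R^3, \ker(D_x)\not=0\}$ its eigenmanifold, and $M_\Lambda \ni x \mapsto |\Lambda(x) \rangle \hspace{-0.2em} \rangle \in \ker D_x$ a normalised quasicoherent state. Then: 1. $\langle \hspace{-0.2em} \langle \Lambda(\vec x)|\vec X|\Lambda(\vec x)\rangle \hspace{-0.2em} \rangle = \vec x$; 2. $\langle \hspace{-0.2em} \langle \Lambda(\vec x)|\vec \sigma|\Lambda(\vec x)\rangle \hspace{-0.2em} \rangle \in N_xM_\Lambda$ (it is a normal vector of the eigenmanifold at $x$); 3. $\Delta_x \vec X^2 = \frac{1}{2} {\varepsilon_{ij}}^k \langle \hspace{-0.2em} \langle \Lambda(x)|\sigma_k \otimes \Theta^{ij}|\Lambda(x)\rangle \hspace{-0.2em} \rangle$ (the Heisenberg uncertainty is minimised).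
   Context: A noncommutative D2-brane $\mathfrak M = (\mathfrak X,\mathbb C^2\otimes \mathscr F, D_x)$ is a spectral triple where $\mathscr F$ is a separable Hilbert space, $\mathfrak X$ a $*$-algebra of operators on $\mathscr F$, and $D_x = \sigma_i \otimes (X^i-x^i)$ its Dirac operator with $(\sigma_i)$ the Pauli matrices, $(X^i)$ self-adjoint operators of $\mathfrak X$ and $x\in\mathbb R^3$. $[X^i,X^j]=\imath\Theta^{ij}$, and $\Delta_x \vec X^2 = \langle \hspace{-0.2em} \langle \Lambda(x)|\vec X^2|\Lambda(x)\rangle \hspace{-0.2em} \rangle - \langle \hspace{-0.2em} \langle \Lambda(x)|\vec X|\Lambda(x)\rangle \hspace{-0.2em} \rangle^2$ with $\vec X^2=\delta_{ij}X^iX^j$. *)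

(* Defs.v *)
From HB Require Import structures.
From mathcomp Require Import all_boot all_order all_algebra.
From mathcomp Require Import all_classical all_reals all_analysis.
From mathcomp Require Import complex.
Set Implicit Arguments. Unset Strict Implicit. Unset Printing Implicit Defensive.
Import Order.TTheory GRing.Theory Num.Theory.
Local Open Scope ring_scope.
Local Open Scope complex_scope.
Local Open Scope classical_set_scope.

Section D2brane.
Variable R : realType.
Local Notation C := R[i].
Variable V : lmodType C.

(** Complex inner product (physicists' convention: antilinear in the first
    argument, linear in the second), <u|v> = ip u v. *)
Definition is_inner_product (ip : V -> V -> C) : Prop :=
  [/\ (forall (a : C) (u v w : V), ip u (a *: v + w) = a * ip u v + ip u w),
      (forall u v : V, ip v u = (ip u v)^*),
      (forall u : V, 0 <= ip u u) &
      (forall u : V, ip u u = 0 -> u = 0)].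

Definition sqnorm (ip : V -> V -> C) (u : V) : R := complex.Re (ip u u).

Definition ip_complete (ip : V -> V -> C) : Prop :=
  forall s : nat -> V,
    (forall e : R, 0 < e -> exists N : nat, forall m n : nat,
        (N <= m)%N -> (N <= n)%N -> sqnorm ip (s m - s n) < e) ->
    exists l : V, forall e : R, 0 < e -> exists N : nat, forall n : nat,
        (N <= n)%N -> sqnorm ip (s n - l) < e.

Definition ip_separable (ip : V -> V -> C) : Prop :=
  exists s : nat -> V, forall (v : V) (e : R), 0 < e ->
    exists n : nat, sqnorm ip (v - s n) < e.

Definition Ostar_domain (ip : V -> V -> C) (Dom : set V)
    (X : 'I_3 -> {linear V -> V}) : Prop :=
  [/\ Dom 0,
      (forall (a : C) (u v : V), Dom u -> Dom v -> Dom (a *: u + v)),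
      (forall (v : V) (e : R), 0 < e -> exists2 d, Dom d & sqnorm ip (v - d) < e),
      (forall (i : 'I_3) (v : V), Dom v -> Dom (X i v)) &
      (forall (i : 'I_3) (u v : V), Dom u -> Dom v -> ip (X i u) v = ip u (X i v))].

(** C^2 (x) F is represented as F * F (components along the canonical basis
    of C^2). *)
Definition ip2 (ip : V -> V -> C) (psi phi : V * V) : C :=
  ip psi.1 phi.1 + ip psi.2 phi.2.

Definition dom2 (Dom : set V) (psi : V * V) : Prop := Dom psi.1 /\ Dom psi.2.

Definition id_tensor (A : V -> V) (psi : V * V) : V * V := (A psi.1, A psi.2).

(** sigma_k (x) A, with sigma_1 = [[0,1],[1,0]], sigma_2 = [[0,-i],[i,0]],
    sigma_3 = [[1,0],[0,-1]] (k = 0,1,2 in 'I_3). *)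
Definition sigma_tensor (k : 'I_3) (A : V -> V) (psi : V * V) : V * V :=
  match nat_of_ord k with
  | 0 => (A psi.2, A psi.1)
  | 1 => (- ('i *: A psi.2), 'i *: A psi.1)
  | _ => (A psi.1, - A psi.2)
  end.

Definition Dirac (X : 'I_3 -> {linear V -> V}) (x : 'rV[R]_3) (psi : V * V)
  : V * V :=
  \sum_(i < 3) sigma_tensor i (fun v => X i v - (x 0 i)%:C *: v) psi.

Definition eigenmanifold (Dom : set V) (X : 'I_3 -> {linear V -> V})
  : set 'rV[R]_3 :=
  [set x | exists psi : V * V, [/\ dom2 Dom psi, psi <> 0 & Dirac X x psi = 0]].

Definition expect (ip : V -> V -> C) (psi : V * V) (A : V * V -> V * V) : C :=
  ip2 ip psi (A psi).

(** Theta^{ij} defined by [X^i, X^j] = i Theta^{ij} *)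
Definition Theta (X : 'I_3 -> {linear V -> V}) (i j : 'I_3) (v : V) : V :=
  - ('i *: (X i (X j v) - X j (X i v))).

(** Levi-Civita symbol epsilon_{ijk} on indices 0,1,2 *)
Definition levi (i j k : 'I_3) : C :=
  ((i%:R - j%:R) * (j%:R - k%:R) * (k%:R - i%:R)) / 2.

Definition DeltaX2 (ip : V -> V -> C) (X : 'I_3 -> {linear V -> V})
    (psi : V * V) : C :=
  expect ip psi (id_tensor (fun v => \sum_(i < 3) X i (X i v)))
  - \sum_(i < 3) (expect ip psi (id_tensor (X i))) ^+ 2.

Definition normalised_quasicoherent_state (ip : V -> V -> C) (Dom : set V)
    (X : 'I_3 -> {linear V -> V}) (Lambda : 'rV[R]_3 -> V * V) : Prop :=
  (forall x, eigenmanifold Dom X x ->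
     [/\ dom2 Dom (Lambda x), Dirac X x (Lambda x) = 0 &
         ip2 ip (Lambda x) (Lambda x) = 1]) /\
  (forall x, eigenmanifold Dom X x -> forall e : R, 0 < e ->
     exists2 d : R, 0 < d & forall y, eigenmanifold Dom X y ->
       `|y - x| < d ->
       sqnorm ip ((Lambda y).1 - (Lambda x).1) +
       sqnorm ip ((Lambda y).2 - (Lambda x).2) < e).

End D2brane.

Definition tangent_vector (R : realType) (M : set 'rV[R]_3) (x v : 'rV[R]_3)
  : Prop :=
  exists g : R -> 'rV[R]_3,
    [/\ g 0 = x, (\forall t \near (0 : R^o), M (g t)), derivable g 0 1 &
        'D_1 g 0 = v].

Definition normal_vector (R : realType) (M : set 'rV[R]_3) (x n : 'rV[R]_3)
  : Prop :=
  forall v, tangent_vector M x v -> \sum_(i < 3) n 0 i * v 0 i = 0.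

(* Main.v *)
Require Import Defs.
From HB Require Import structures.
From mathcomp Require Import all_boot all_order all_algebra.
From mathcomp Require Import all_classical all_reals all_analysis.
From mathcomp Require Import complex.
From mathcomp Require Import ring lra.
Import Order.TTheory GRing.Theory Num.Theory.
Local Open Scope ring_scope.
Local Open Scope complex_scope.
Local Open Scope classical_set_scope.
Set Implicit Arguments. Unset Strict Implicit.
Lemma ip02 (R : realType) (V : lmodType R[i]) (ip : V -> V -> R[i]) :
  is_inner_product ip -> forall u, ip u 0 = 0.
Proof.
case=> hl _ _ _ u; have := hl 1 u 0 0; rewrite scale1r addr0 mul1r.
by move=> e; have := congr1 (fun z => z - ip u 0) e; rewrite addrK subrr.
Qed.
Lemma ipD2 (R : realType) (V : lmodType R[i]) (ip : V -> V -> R[i]) :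
  is_inner_product ip -> forall u v w, ip u (v + w) = ip u v + ip u w.
Proof. by case=> hl _ _ _ u v w; rewrite -[v in LHS]scale1r hl mul1r. Qed.
Lemma ipZ2 (R : realType) (V : lmodType R[i]) (ip : V -> V -> R[i]) :
  is_inner_product ip -> forall a u v, ip u (a *: v) = a * ip u v.
Proof. move=> h a u v; have := h; case=> hl _ _ _.
by rewrite -[a *: v]addr0 hl ip02 // addr0. Qed.
Lemma ipN2 (R : realType) (V : lmodType R[i]) (ip : V -> V -> R[i]) :
  is_inner_product ip -> forall u v, ip u (- v) = - ip u v.
Proof. by move=> h u v; rewrite -scaleN1r ipZ2 // mulN1r. Qed.
Lemma ipB2 (R : realType) (V : lmodType R[i]) (ip : V -> V -> R[i]) :
  is_inner_product ip -> forall u v w, ip u (v - w) = ip u v - ip u w.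
Proof. by move=> h u v w; rewrite ipD2 // ipN2. Qed.
Lemma ipC (R : realType) (V : lmodType R[i]) (ip : V -> V -> R[i]) :
  is_inner_product ip -> forall u v, ip v u = (ip u v)^*.
Proof. by case. Qed.
Lemma ipD1 (R : realType) (V : lmodType R[i]) (ip : V -> V -> R[i]) :
  is_inner_product ip -> forall u v w, ip (v + w) u = ip v u + ip w u.
Proof. by move=> h u v w; rewrite !(ipC h u) ipD2 // rmorphD. Qed.
Lemma ipZ1 (R : realType) (V : lmodType R[i]) (ip : V -> V -> R[i]) :
  is_inner_product ip -> forall a u v, ip (a *: v) u = a^* * ip v u.
Proof. by move=> h a u v; rewrite !(ipC h u) ipZ2 // rmorphM. Qed.
Lemma ipN1 (R : realType) (V : lmodType R[i]) (ip : V -> V -> R[i]) :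
  is_inner_product ip -> forall u v, ip (- v) u = - ip v u.
Proof. by move=> h u v; rewrite !(ipC h u) ipN2 // rmorphN. Qed.
Lemma ipB1 (R : realType) (V : lmodType R[i]) (ip : V -> V -> R[i]) :
  is_inner_product ip -> forall u v w, ip (v - w) u = ip v u - ip w u.
Proof. by move=> h u v w; rewrite ipD1 // ipN1. Qed.
Lemma ip01 (R : realType) (V : lmodType R[i]) (ip : V -> V -> R[i]) :
  is_inner_product ip -> forall u, ip 0 u = 0.
Proof. by move=> h u; rewrite ipC // ip02 // rmorph0. Qed.

Definition o0 : 'I_3 := @Ordinal 3 0 isT.
Definition o1 : 'I_3 := @Ordinal 3 1 isT.
Definition o2 : 'I_3 := @Ordinal 3 2 isT.
Lemma sum3 (T : nmodType) (F : 'I_3 -> T) : \sum_(i < 3) F i = F o0 + F o1 + F o2.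
Proof.
rewrite !big_ord_recr big_ord0 /= add0r.
by congr (F _ + F _ + F _); apply: val_inj.
Qed.
Lemma ord3P (P : 'I_3 -> Prop) : P o0 -> P o1 -> P o2 -> forall i, P i.
Proof.
move=> h0 h1 h2 [[|[|[|k]]] hk] //.
- by rewrite (_ : Ordinal hk = o0) //; apply: val_inj.
- by rewrite (_ : Ordinal hk = o1) //; apply: val_inj.
- by rewrite (_ : Ordinal hk = o2) //; apply: val_inj.
Qed.
Lemma conji (R : realType) : ('i : R[i])^* = - 'i.
Proof. by apply/eqP; rewrite eq_complex /= oppr0 !eqxx. Qed.

Lemma ipX1 (R : realType) (V : lmodType R[i]) (ip : V -> V -> R[i]) Dom X :
  Ostar_domain ip Dom X -> forall k u v, Dom u -> Dom v -> ip (X k u) v = ip u (X k v).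
Proof. by case=> _ _ _ _ h k u v hu hv; apply: h. Qed.

Lemma ipXsym (R : realType) (V : lmodType R[i]) (ip : V -> V -> R[i]) Dom X :
  is_inner_product ip -> Ostar_domain ip Dom X -> forall k u v, Dom u -> Dom v ->
  ip u (X k v) = (ip v (X k u))^*.
Proof. by move=> hip hd k u v hu hv; rewrite -(ipX1 hd) // (ipC hip). Qed.

Ltac facts hip hd p q hp hq :=
  move: (ipXsym hip hd o0 hp hp) (ipXsym hip hd o1 hp hp) (ipXsym hip hd o2 hp hp)
        (ipXsym hip hd o0 hq hq) (ipXsym hip hd o1 hq hq) (ipXsym hip hd o2 hq hq)
        (ipXsym hip hd o0 hp hq) (ipXsym hip hd o1 hp hq) (ipXsym hip hd o2 hp hq)
        (ipC hip p p) (ipC hip q q) (ipC hip p q).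

Lemma eqC (R : realType) (a b c d : R) : a +i* b = c +i* d -> a = c /\ b = d.
Proof. by case. Qed.
Ltac finish := 
  do ?[ move=> /eqC [? ?] ];
  apply/eqP; rewrite eq_complex /=; apply/andP; split; apply/eqP; lra.

Lemma XD (R : realType) (V : lmodType R[i]) (X : 'I_3 -> {linear V -> V}) k u v :
  X k (u + v) = X k u + X k v. Proof. exact: linearD. Qed.
Lemma XB (R : realType) (V : lmodType R[i]) (X : 'I_3 -> {linear V -> V}) k u v :
  X k (u - v) = X k u - X k v. Proof. exact: linearB. Qed.
Lemma XN (R : realType) (V : lmodType R[i]) (X : 'I_3 -> {linear V -> V}) k u :
  X k (- u) = - X k u. Proof. exact: linearN. Qed.
Lemma XZ (R : realType) (V : lmodType R[i]) (X : 'I_3 -> {linear V -> V}) k a u :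
  X k (a *: u) = a *: X k u. Proof. exact: linearZ. Qed.

Lemma cD (R : realType) (a b c d : R) : (a +i* b) + (c +i* d) = (a + c) +i* (b + d).
Proof. by []. Qed.
Lemma cN (R : realType) (a b : R) : - (a +i* b) = (- a) +i* (- b).
Proof. by []. Qed.
Lemma cM (R : realType) (a b c d : R) : (a +i* b) * (c +i* d) = (a * c - b * d) +i* (a * d + b * c).
Proof. by []. Qed.
Lemma cJ (R : realType) (a b : R) : (a +i* b)^* = a +i* (- b).
Proof. by []. Qed.

Ltac crush ip :=
  repeat match goal with |- context [ip ?a ?b] => move: (ip a b) => [? ?] end;
  rewrite /real_complex_def;
  rewrite -?[1 : _[i]]/(1 +i* 0);
  rewrite !(cD, cN, cM, cJ).

Lemma part1 (R : realType) (V : lmodType R[i]) (ip : V -> V -> R[i]) Dom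
   (X : 'I_3 -> {linear V -> V}) x p q :
  is_inner_product ip -> Ostar_domain ip Dom X -> Dom p -> Dom q ->
  Dirac X x (p, q) = 0 -> ip p p + ip q q = 1 ->
  forall j, ip p (X j p) + ip q (X j q) = (x 0 j)%:C.
Proof.
move=> hip hd hp hq hE hn.
have hn' : ip q q = 1 - ip p p by rewrite -hn addrC addKr.
have hXd : forall k v, Dom v -> Dom (X k v) by case: hd.
have e1 : forall j, ip (Dirac X x (p, q)).1 (sigma_tensor j id (p,q)).1
   + ip (Dirac X x (p, q)).2 (sigma_tensor j id (p,q)).2 +
   ip p (sigma_tensor j id (Dirac X x (p, q))).1 + ip q (sigma_tensor j id (Dirac X x (p, q))).2 = 0.
  by move=> j; rewrite hE /sigma_tensor /=; case: (nat_of_ord j) => [|[|?]] /=;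
     rewrite ?oppr0 ?scaler0 ?oppr0 !(ip01 hip) !(ip02 hip) !addr0.
apply: ord3P.
- move: (e1 o0); rewrite /Dirac sum3 /sigma_tensor /=.
  rewrite !(ipD1 hip, ipB1 hip, ipN1 hip, ipZ1 hip, ipD2 hip, ipB2 hip, ipN2 hip, ipZ2 hip, XD, XB, XN, XZ).
  rewrite !(ipX1 hd) //; rewrite ?conji ?conjc_real hn'.
  facts hip hd p q hp hq. crush ip. finish.
- move: (e1 o1); rewrite /Dirac sum3 /sigma_tensor /=.
  rewrite !(ipD1 hip, ipB1 hip, ipN1 hip, ipZ1 hip, ipD2 hip, ipB2 hip, ipN2 hip, ipZ2 hip, XD, XB, XN, XZ).
  rewrite !(ipX1 hd) //; rewrite ?conji ?conjc_real hn'.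
  facts hip hd p q hp hq. crush ip. finish.
- move: (e1 o2); rewrite /Dirac sum3 /sigma_tensor /=.
  rewrite !(ipD1 hip, ipB1 hip, ipN1 hip, ipZ1 hip, ipD2 hip, ipB2 hip, ipN2 hip, ipZ2 hip, XD, XB, XN, XZ).
  rewrite !(ipX1 hd) //; rewrite ?conji ?conjc_real hn'.
  facts hip hd p q hp hq. crush ip. finish.
Qed.

Lemma eps_sum (R : realType) (f : 'I_3 -> 'I_3 -> 'I_3 -> R[i]) :
  \sum_(i < 3) \sum_(j < 3) \sum_(k < 3) levi R i j k * f i j k =
  f o0 o1 o2 - f o1 o0 o2 + f o1 o2 o0 - f o2 o1 o0 + f o2 o0 o1 - f o0 o2 o1.
Proof.
rewrite !sum3 /levi /=.
have h2 : (2 : R[i]) != 0 by rewrite pnatr_eq0.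
by field.
Qed.

Lemma X0 (R : realType) (V : lmodType R[i]) (X : 'I_3 -> {linear V -> V}) k :
  X k 0 = 0. Proof. exact: raddf0. Qed.

Lemma Dirac0 (R : realType) (V : lmodType R[i]) (X : 'I_3 -> {linear V -> V}) x :
  Dirac X x 0 = 0.
Proof.
rewrite /Dirac big1 // => i _; rewrite /sigma_tensor /= X0 scaler0 subrr.
by case: (nat_of_ord i) => [|[|?]]; rewrite ?scaler0 ?oppr0.
Qed.

Ltac linX X :=
  let f0 := fresh "f0" in let f1 := fresh "f1" in let f2 := fresh "f2" in
  set f0 := (X o0 : _ -> _); set f1 := (X o1 : _ -> _); set f2 := (X o2 : _ -> _);
  let f0D := fresh in let f1D := fresh in let f2D := fresh in
  let f0N := fresh in let f1N := fresh in let f2N := fresh in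
  let f0Z := fresh in let f1Z := fresh in let f2Z := fresh in
  have f0D : forall u v, f0 (u + v) = f0 u + f0 v := XD X o0;
  have f1D : forall u v, f1 (u + v) = f1 u + f1 v := XD X o1;
  have f2D : forall u v, f2 (u + v) = f2 u + f2 v := XD X o2;
  have f0N : forall u, f0 (- u) = - f0 u := XN X o0;
  have f1N : forall u, f1 (- u) = - f1 u := XN X o1;
  have f2N : forall u, f2 (- u) = - f2 u := XN X o2;
  have f0Z : forall a u, f0 (a *: u) = a *: f0 u := XZ X o0;
  have f1Z : forall a u, f1 (a *: u) = a *: f1 u := XZ X o1;
  have f2Z : forall a u, f2 (a *: u) = a *: f2 u := XZ X o2;
  rewrite ?(f0D, f1D, f2D, f0N, f1N, f2N, f0Z, f1Z, f2Z);
  clear f0D f1D f2D f0N f1N f2N f0Z f1Z f2Z.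

Ltac expand hip :=
  rewrite ?(ipD2 hip, ipB2 hip, ipN2 hip, ipZ2 hip);
  rewrite ?(ipD1 hip, ipB1 hip, ipN1 hip, ipZ1 hip).

Lemma cRe (R : realType) (a b : R) : complex.Re (a +i* b) = a. Proof. by []. Qed.
Ltac finishR := do ?[ move=> /eqC [? ?] ]; lra.

Lemma key2 (R : realType) (V : lmodType R[i]) (ip : V -> V -> R[i]) Dom
   (X : 'I_3 -> {linear V -> V}) x y p q r s :
  is_inner_product ip -> Ostar_domain ip Dom X -> Dom p -> Dom q -> Dom r -> Dom s ->
  Dirac X x (p, q) = 0 -> Dirac X y (r, s) = 0 ->
  \sum_(k < 3) (y 0 k - x 0 k) * complex.Re (ip2 ip (sigma_tensor k id (p, q)) (r, s)) = 0.
Proof.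
move=> hip hd hp hq hr hs hE hE'.
have hXd : forall k v, Dom v -> Dom (X k v) by case: hd.
have e : ip2 ip (p, q) (Dirac X y (r, s)) - ip2 ip (Dirac X x (p, q)) (r, s) = 0.
  by rewrite hE hE' /ip2 /= !(ip02 hip) !(ip01 hip) !addr0 subrr.
move: e; rewrite /ip2 /Dirac !sum3 /sigma_tensor /=.
linX X. expand hip.
rewrite !(ipX1 hd) //; rewrite ?conji ?conjc_real.
crush ip. rewrite !cRe. finishR.
Qed.

Lemma nreal (R : realType) (V : lmodType R[i]) (ip : V -> V -> R[i]) p q :
  is_inner_product ip -> forall k,
  expect ip (p, q) (sigma_tensor k id) = (complex.Re (ip2 ip (sigma_tensor k id (p, q)) (p, q)))%:C.
Proof.
move=> hip; apply: ord3P; rewrite /expect /ip2 /sigma_tensor /=;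
  rewrite ?(ipN2 hip, ipZ2 hip, ipN1 hip, ipZ1 hip) ?conji;
  move: (ipC hip p p) (ipC hip q q) (ipC hip p q);
  crush ip; rewrite !cRe; finish.
Qed.

Lemma bnd (R : realType) (V : lmodType R[i]) (ip : V -> V -> R[i]) a w t :
  is_inner_product ip -> 0 < t ->
  2 * t * complex.Re (ip a w) <= t ^+ 2 * complex.Re (ip a a) + complex.Re (ip w w) /\
  - (2 * t * complex.Re (ip a w)) <= t ^+ 2 * complex.Re (ip a a) + complex.Re (ip w w).
Proof.
move=> hip t0; have hpos : forall u, 0 <= complex.Re (ip u u).
  by move=> u; case: hip => _ _ h _; move: (h u); rewrite lecE => /andP[_].
have h1 := hpos (t%:C *: a - w); have h2 := hpos (t%:C *: a + w).
move: h1 h2; rewrite !(ipD2 hip, ipB2 hip, ipN2 hip, ipZ2 hip, ipD1 hip, ipB1 hip, ipN1 hip, ipZ1 hip) ?conjc_real.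
move: (ipC hip a w); crush ip; rewrite !cRe => /eqC [h3 h4] h1 h2.
split; nra.
Qed.

Lemma part3 (R : realType) (V : lmodType R[i]) (ip : V -> V -> R[i]) Dom
   (X : 'I_3 -> {linear V -> V}) x p q :
  is_inner_product ip -> Ostar_domain ip Dom X -> Dom p -> Dom q ->
  Dirac X x (p, q) = 0 -> ip p p + ip q q = 1 ->
  DeltaX2 ip X (p, q) =
          2^-1 * \sum_(i < 3) \sum_(j < 3) \sum_(k < 3)
                   levi R i j k * expect ip (p, q) (sigma_tensor k (Theta X i j)).
Proof.
move=> hip hd hp hq hE hn.
have c1 := part1 hip hd hp hq hE hn.
have hn' : ip q q = 1 - ip p p by rewrite -hn addrC addKr.
have c1' : forall j, ip q (X j q) = (x 0 j)%:C - ip p (X j p).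
  by move=> j; rewrite -c1 addrC addKr.
have e2 : ip p (Dirac X x (Dirac X x (p, q))).1 + ip q (Dirac X x (Dirac X x (p, q))).2 = 0.
  by rewrite hE Dirac0 /= !(ip02 hip) addr0.
rewrite eps_sum.
suff h : 2 * DeltaX2 ip X (p, q) =
  expect ip (p, q) (sigma_tensor o2 (Theta X o0 o1)) - expect ip (p, q) (sigma_tensor o2 (Theta X o1 o0)) +
  expect ip (p, q) (sigma_tensor o0 (Theta X o1 o2)) - expect ip (p, q) (sigma_tensor o0 (Theta X o2 o1)) +
  expect ip (p, q) (sigma_tensor o1 (Theta X o2 o0)) - expect ip (p, q) (sigma_tensor o1 (Theta X o0 o2)).
  by rewrite -h mulrA mulVf ?mul1r // pnatr_eq0.
move: e2; rewrite /DeltaX2 sum3.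
have ce : forall j, expect ip (p, q) (id_tensor (X j)) = (x 0 j)%:C by move=> j; exact: c1.
rewrite !ce /expect /ip2 /id_tensor /Theta /Dirac !sum3 /sigma_tensor /=.
linX X.
expand hip.
rewrite ?conji ?conjc_real !c1' hn'.
crush ip. finish.
Qed.

Import numFieldNormedType.Exports.

Lemma key2' (R : realType) (V : lmodType R[i]) (ip : V -> V -> R[i]) Dom
   (X : 'I_3 -> {linear V -> V}) x y (psi chi : V * V) :
  is_inner_product ip -> Ostar_domain ip Dom X -> dom2 Dom psi -> dom2 Dom chi ->
  Dirac X x psi = 0 -> Dirac X y chi = 0 ->
  \sum_(k < 3) (y 0 k - x 0 k) * complex.Re (ip2 ip (sigma_tensor k id psi) chi) = 0.
Proof. case: psi chi => p q [r s] hip hd [/= hp hq] [/= hr hs]. exact: (key2 hip hd hp hq hr hs). Qed.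

Lemma hQ_lemma (R : realType) (g : R^o -> 'rV[R]_3) (x v : 'rV[R]_3) :
  g 0 = x -> derivable g 0 1 -> 'D_1 g 0 = v ->
  (fun t : R^o => t^-1 *: (g t - x)) @ (0 : R^o)^' --> v.
Proof.
move=> g0; rewrite /derivable /derive => h <-.
have -> : (fun t : R^o => t^-1 *: (g t - x)) = (fun h => h^-1 *: ((g \o shift 0) h%:A - g 0)).
  apply/funext => h0 /=; rewrite g0 addr0; congr (_ *: (g _ - _)); by rewrite /GRing.scale /= mulr1.
exact h.
Qed.

Lemma part2 (R : realType) (V : lmodType R[i]) (ip : V -> V -> R[i]) (Dom : set V)
  (X : 'I_3 -> {linear V -> V}) (Lambda : 'rV[R]_3 -> V * V) (x : 'rV[R]_3) :
  is_inner_product ip -> Ostar_domain ip Dom X ->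
  normalised_quasicoherent_state ip Dom X Lambda -> eigenmanifold Dom X x ->
  exists n : 'rV[R]_3,
    (forall k : 'I_3, expect ip (Lambda x) (sigma_tensor k id) = (n 0 k)%:C) /\
    normal_vector (eigenmanifold Dom X) x n.
Proof.
move=> hip hd [hqc hcont] hx.
pose W k y := complex.Re (ip2 ip (sigma_tensor k id (Lambda x)) (Lambda y)).
exists (\row_k W k x); split.
  move=> k; rewrite mxE /W; have [hD _ _] := hqc x hx.
  by case: (Lambda x) hD => p q _; exact: nreal.
move=> v [g [g0 hM hder Dv]].
have hQ : (fun t : R^o => t^-1 *: (g t - x)) @ (0 : R^o)^' --> v by exact: hQ_lemma.
have hQk : forall k, (fun t : R^o => (t^-1 *: (g t - x)) 0 k) @ (0 : R^o)^' --> v 0 k.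
  move=> k; exact: (continuous_cvg _ (@coord_continuous R 1 3 0 k v) hQ).
have hg : (fun t : R^o => g t) @ (0 : R^o)^' --> x.
  have -> : (fun t : R^o => g t) = (fun t : R^o => x + t *: (t^-1 *: (g t - x))).
    apply/funext => t; have [->|t0] := eqVneq t 0; first by rewrite scale0r addr0 g0.
    by rewrite scalerA mulfV // scale1r addrC subrK.
  have hid : (fun t : R^o => t) @ (0 : R^o)^' --> (0 : R^o).
    by move=> A hA; apply: nbhs_dnbhs; exact hA.
  have h : (fun t : R^o => x + t *: (t^-1 *: (g t - x))) @ (0 : R^o)^' --> x + (0 : R^o) *: v.
    exact: (cvgD (cvg_cst x) (cvgZ hid hQ)).
  by rewrite scale0r addr0 in h.
have hMp : \forall t \near (0 : R^o)^', eigenmanifold Dom X (g t).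
  by apply: nbhs_dnbhs; exact hM.
have hpos : forall u, 0 <= complex.Re (ip u u).
  by move=> u; case: hip => _ _ h _; move: (h u); rewrite lecE => /andP[_].
have hW : forall k, (fun t : R^o => W k (g t)) @ (0 : R^o)^' --> W k x.
  move=> k; apply/cvgrPdist_lt => eps eps0.
  set a := sigma_tensor k id (Lambda x).
  set A12 := complex.Re (ip a.1 a.1) + complex.Re (ip a.2 a.2).
  have A120 : 0 <= A12 by rewrite addr_ge0.
  have A0 : 0 < A12 + 1 by rewrite ltr_wpDl.
  set t0 := eps / (A12 + 1).
  have t00 : 0 < t0 by rewrite divr_gt0.
  have epsE : eps = t0 * (A12 + 1) by rewrite /t0 divfK // gt_eqF.
  have e0 : 0 < t0 * t0 * (A12 + 1) by apply: mulr_gt0 => //; exact: mulr_gt0.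
  have [d d0 hd'] := hcont x hx _ e0.
  have hgd : \forall t \near (0 : R^o)^', `|x - g t| < d.
    by move: hg => /cvgrPdist_lt; apply.
  near=> t.
  have Mt : eigenmanifold Dom X (g t) by near: t.
  have Dt : `|g t - x| < d by rewrite distrC; near: t.
  have := hd' _ Mt Dt; rewrite /sqnorm.
  set w1 := (Lambda (g t)).1 - (Lambda x).1.
  set w2 := (Lambda (g t)).2 - (Lambda x).2.
  move=> hB.
  have eqW : W k (g t) - W k x = complex.Re (ip a.1 w1) + complex.Re (ip a.2 w2).
    rewrite /W /ip2 /w1 /w2 !(ipB2 hip) -/a.
    rewrite !raddfD !raddfN /=. lra.
  have [b1 b1'] := bnd a.1 w1 hip t00.
  have [b2 b2'] := bnd a.2 w2 hip t00.
  move: hB b1 b1' b2 b2'; rewrite /A12; clearbody t0 => hB b1 b1' b2 b2'.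
  rewrite epsE /A12 -normrN opprB ltr_norml; apply/andP; split; rewrite eqW -(ltr_pM2l t00); nra.
pose Q k (t : R^o) := (t^-1 *: (g t - x)) 0 k.
pose phi (t : R^o) := Q o0 t * W o0 (g t) + Q o1 t * W o1 (g t) + Q o2 t * W o2 (g t).
have hphi : phi @ (0 : R^o)^' --> v 0 o0 * W o0 x + v 0 o1 * W o1 x + v 0 o2 * W o2 x.
  apply: cvgD; first apply: cvgD.
  - exact: (cvgM (hQk o0) (hW o0)).
  - exact: (cvgM (hQk o1) (hW o1)).
  - exact: (cvgM (hQk o2) (hW o2)).
have hphi0 : \forall t \near (0 : R^o)^', (fun=> 0 : R) t = phi t.
  near=> t.
  have Mt : eigenmanifold Dom X (g t) by near: t.
  have tn0 : t != 0 by near: t; exact: nbhs_dnbhs_neq.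
  have [hDx hEx _] := hqc x hx.
  have [hDy hEy _] := hqc _ Mt.
  have := key2' hip hd hDx hDy hEx hEy.
  rewrite sum3 /phi /Q /W !mxE => h.
  have -> : t^-1 * (g t 0 o0 - x 0 o0) * complex.Re (ip2 ip (sigma_tensor o0 id (Lambda x)) (Lambda (g t))) +
    t^-1 * (g t 0 o1 - x 0 o1) * complex.Re (ip2 ip (sigma_tensor o1 id (Lambda x)) (Lambda (g t))) +
    t^-1 * (g t 0 o2 - x 0 o2) * complex.Re (ip2 ip (sigma_tensor o2 id (Lambda x)) (Lambda (g t))) =
    t^-1 * ((g t 0 o0 - x 0 o0) * complex.Re (ip2 ip (sigma_tensor o0 id (Lambda x)) (Lambda (g t))) +
    (g t 0 o1 - x 0 o1) * complex.Re (ip2 ip (sigma_tensor o1 id (Lambda x)) (Lambda (g t))) +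
    (g t 0 o2 - x 0 o2) * complex.Re (ip2 ip (sigma_tensor o2 id (Lambda x)) (Lambda (g t)))) by ring.
  by rewrite h mulr0.
have h0 : phi @ (0 : R^o)^' --> (0 : R).
  exact: (cvg_trans (near_eq_cvg hphi0) (cvg_cst (0 : R))).
have E : v 0 o0 * W o0 x + v 0 o1 * W o1 x + v 0 o2 * W o2 x = 0.
  apply: (cvg_unique _ hphi h0); exact: norm_hausdorff.
rewrite sum3 !mxE -E; ring.
Unshelve. all: by end_near.
Qed.
Unset Implicit Arguments.

Theorem mainTheorem2 (R : realType) (V : lmodType R[i]) (ip : V -> V -> R[i])
    (Dom : set V) (X : 'I_3 -> {linear V -> V})
    (Lambda : 'rV[R]_3 -> V * V) :
  is_inner_product ip -> ip_complete ip -> ip_separable ip ->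
  Ostar_domain ip Dom X ->
  normalised_quasicoherent_state ip Dom X Lambda ->
  forall x : 'rV[R]_3, eigenmanifold Dom X x ->
    [/\ (forall i : 'I_3,
           expect ip (Lambda x) (id_tensor (X i)) = (x 0 i)%:C),
        (exists n : 'rV[R]_3,
           (forall k : 'I_3,
              expect ip (Lambda x) (sigma_tensor k id) = (n 0 k)%:C) /\
           normal_vector (eigenmanifold Dom X) x n) &
        DeltaX2 ip X (Lambda x) =
          2^-1 * \sum_(i < 3) \sum_(j < 3) \sum_(k < 3)
                   levi R i j k * expect ip (Lambda x) (sigma_tensor k (Theta X i j))].
Proof.
move=> hip _ _ hd hq x hx.
have hq' := hq; case: hq' => [hqc _].
have [hD hE hn] := hqc x hx.
split.
- move=> i; rewrite /expect /ip2 /id_tensor.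
  case: (Lambda x) hD hE hn => p q [/= hp hq0] hE; rewrite /ip2 /= => hn.
  exact: (part1 hip hd hp hq0 hE hn).
- exact: (part2 hip hd hq hx).
- case: (Lambda x) hD hE hn => p q [/= hp hq0] hE; rewrite /ip2 /= => hn.
  exact: (part3 hip hd hp hq0 hE hn).
Qed.
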